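(* Let $\chi$ be a Dirichlet character mod $q$ induced by the primitive Dirichlet character $\psi$ mod $q_0$. Then for each $n\ge1$, $$\sum_{d\mid n}\tau(d,\chi)\,\mu(\tfrac nd)\,\overline{\psi(\tfrac nd)}=\begin{cases}n\,\tau(\psi)\,\mu(\frac{q}{nq_0})\,\psi(\frac{q}{nq_0}),& n\mid\frac q{q_0},\\ 0,& n\nmid\frac q{q_0}.\end{cases}$$
   Context: A Dirichlet character mod $m$ is a completely multiplicative $m$-periodic function with $\chi(n)\ne0$ iff $\gcd(n,m)=1$. $\psi$ mod $q_0$ induces $\chi$ mod $q$ if $q_0\mid q$ and $\chi=\psi\chi_q$ with $\chi_q$ the principal character mod $q$; primitive means not induced by a character of modulus a proper divisor. $\mu$ is the Möbius function. For a character $\chi$ mod $m$, $\tau(n,\chi)=\sum_{k=1}^m\chi(k)e^{2\pi ikn/m}$ and $\tau(\chi)=\tau(1,\chi)$. *)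

(* Defs.v *)
From mathcomp Require Import all_boot all_order all_algebra.
From mathcomp Require Import all_classical all_reals trigo.
From mathcomp.real_closed Require Export complex.
Import GRing.Theory Num.Theory.
Set Implicit Arguments. Unset Strict Implicit. Unset Printing Implicit Defensive.
Local Open Scope ring_scope.
Local Open Scope complex_scope.

Definition moebius (n : nat) : int :=
  if n == 0%N then 0
  else if all (fun p => logn p n == 1%N) (primes n)
       then (-1) ^+ size (primes n) else 0.

Section Dirichlet.
Variable R : realType.

Definition expi (x : R) : R[i] := cos (2 * pi * x) +i* sin (2 * pi * x).

(* chi : nat -> C is a Dirichlet character modulo m (m >= 1).  Characters are
   determined by their values on nonnegative integers by periodicity. *)
Definition is_dchar (m : nat) (chi : nat -> R[i]) : Prop :=
  (0 < m)%N /\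
  (forall n, chi (n + m)%N = chi n) /\
  (forall a b, chi (a * b)%N = chi a * chi b) /\
  (forall n, chi n != 0 <-> coprime n m).

Definition principal (q : nat) (n : nat) : R[i] := if coprime n q then 1 else 0.

Definition induces (q0 : nat) (psi : nat -> R[i]) (q : nat) (chi : nat -> R[i]) : Prop :=
  is_dchar q0 psi /\ is_dchar q chi /\ (q0 %| q)%N /\
  (forall n, chi n = psi n * principal q n).

Definition primitive (q0 : nat) (psi : nat -> R[i]) : Prop :=
  is_dchar q0 psi /\
  forall (d : nat) (phi : nat -> R[i]), (d %| q0)%N -> d != q0 -> ~ induces d phi q0 psi.

Definition gauss (m : nat) (chi : nat -> R[i]) (n : nat) : R[i] :=
  \sum_(1 <= k < m.+1) chi k * expi ((k * n)%:R / m%:R).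

End Dirichlet.

(* Main.v *)
Require Import Defs.
From mathcomp Require Import all_boot all_order all_algebra.
From mathcomp Require Import all_classical all_reals trigo.
From mathcomp.real_closed Require Import complex.
From mathcomp Require Import cyclic.
From mathcomp Require Import zify ring.
Import GRing.Theory Num.Theory.
Local Open Scope ring_scope.
Local Open Scope complex_scope.

Section S.
Context {R : realType}.
Lemma expiD (x y : R) : expi (x + y) = expi x * expi y.
Proof.
rewrite /expi mulrDr cosD sinD.
rewrite [RHS]/GRing.mul /=.
by congr (_ +i* _); rewrite addrC.
Qed.

Lemma expi0 : expi (0 : R) = 1.
Proof. by rewrite /expi mulr0 cos0 sin0. Qed.

Lemma expi_nat (k : nat) : expi (k%:R : R) = 1.
Proof.
elim: k => [|k IH]; first exact: expi0.
rewrite -addn1 natrD expiD IH mul1r /expi mulr1.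
have -> : 2 * pi = pi *+ 2 :> R by rewrite mulr_natl.
by rewrite cos2pi sin2pi.
Qed.

Lemma expiMn (x : R) (b : nat) : expi (b%:R * x) = expi x ^+ b.
Proof.
elim: b => [|b IH]; first by rewrite mul0r expi0 expr0.
by rewrite -addn1 natrD mulrDl mul1r expiD IH addn1 exprSr.
Qed.

Lemma cos_lt1 (y : R) : 0 < y < pi *+ 2 -> cos y < 1.
Proof.
move=> /andP[y0 y2].
have -> : y = y / 2 + y / 2 by rewrite -splitr.
rewrite cosD -expr2 cos2sin2.
have s0 : 0 < sin (y / 2).
  apply: sin_gt0_pi; apply/andP; split; first by rewrite divr_gt0.
  by rewrite ltr_pdivrMr // mulr_natr.
rewrite -expr2 -(addrA 1) gtrDl -opprD oppr_lt0.
by rewrite addr_gt0 // exprn_gt0.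
Qed.

Lemma expi_neq1 (x : R) : 0 < x < 1 -> expi x != 1.
Proof.
move=> /andP[x0 x1]; apply/eqP => /(congr1 (@complex.Re R)) /= hc.
have : cos (2 * pi * x) < 1.
  apply: cos_lt1; apply/andP; split.
    by rewrite mulr_gt0 // mulr_gt0 // pi_gt0.
  have -> : pi *+ 2 = 2 * pi * 1 :> R by rewrite mulr1 mulr_natl.
  by rewrite ltr_pM2l // mulr_gt0 // pi_gt0.
by rewrite hc Order.POrderTheory.ltxx.
Qed.

Definition E (m a : nat) : R[i] := expi ((a%:R : R) / m%:R).

Lemma E_mod m a : (0 < m)%N -> E m a = E m (a %% m).
Proof.
move=> m0; rewrite /E {1}(divn_eq a m) natrD mulrDl expiD natrM mulfK.
  by rewrite expi_nat mul1r.
by rewrite pnatr_eq0 -lt0n.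
Qed.

Lemma E_modeq m a b : (0 < m)%N -> a = b %[mod m] -> E m a = E m b.
Proof. by move=> m0 h; rewrite E_mod // h -E_mod. Qed.

Lemma E_D m a b : E m (a + b) = E m a * E m b.
Proof. by rewrite /E natrD mulrDl expiD. Qed.

Lemma E_scale e m a : (0 < e)%N -> E (e * m) (e * a) = E m a.
Proof.
move=> e0; rewrite /E !natrM; congr expi.
have e0' : (e%:R : R) != 0 by rewrite pnatr_eq0 -lt0n.
by rewrite invfM mulrACA divff // mul1r.
Qed.

Lemma E_pow m a b : E m (b * a) = E m a ^+ b.
Proof. by rewrite /E natrM -mulrA expiMn. Qed.

Lemma E_mul m a : (0 < m)%N -> E m (m * a) = 1.
Proof. by move=> m0; rewrite E_mod // modnMr /E mul0r expi0. Qed.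

Lemma E_neq1 m a : (0 < m)%N -> ~~ (m %| a)%N -> E m a != 1.
Proof.
move=> m0 na; rewrite E_mod //; apply: expi_neq1.
have h1 : (0 < a %% m)%N by rewrite lt0n -/(dvdn m a).
have h2 : (a %% m < m)%N by rewrite ltn_mod.
have m0' : (0 : R) < m%:R by rewrite ltr0n.
apply/andP; split; first by rewrite divr_gt0 // ltr0n.
by rewrite ltr_pdivrMr // mul1r ltr_nat.
Qed.

Lemma geomE s d : (0 < s)%N ->
  \sum_(b < s) E s (b * d) = if (s %| d)%N then s%:R else 0.
Proof.
move=> s0; under eq_bigr => b _ do rewrite E_pow.
case: ifP => sd.
  have -> : E s d = 1 by case/dvdnP: sd => k ->; rewrite mulnC E_mul.
  by under eq_bigr => b _ do rewrite expr1n; rewrite sumr_const card_ord.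
have h := subrX1 (E s d) s.
have e1 : E s d ^+ s = 1 by rewrite -E_pow E_mul.
move: h; rewrite e1 subrr => /esym /eqP; rewrite mulf_eq0 subr_eq0.
by rewrite (negbTE (@E_neq1 s d s0 (negbT sd))) /= => /eqP.
Qed.
End S.

Section S2.
Context {R : realType}.
Implicit Types chi psi : nat -> R[i].

Lemma dchar_addM m chi a k : is_dchar m chi -> chi (a + k * m)%N = chi a.
Proof.
move=> [_ [hp _]]; elim: k => [|k IH]; first by rewrite mul0n addn0.
by rewrite mulSn addnCA addnC hp IH.
Qed.

Lemma dchar_mod m chi a : is_dchar m chi -> chi a = chi (a %% m)%N.
Proof. by move=> H; rewrite {1}(div.divn_eq a m) addnC dchar_addM. Qed.

Lemma dchar_modeq m chi a b : is_dchar m chi -> a = b %[mod m] -> chi a = chi b.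
Proof. by move=> H h; rewrite (@dchar_mod m chi a H) h -(@dchar_mod m chi b H). Qed.

Lemma dchar_M m chi a b : is_dchar m chi -> chi (a * b)%N = chi a * chi b.
Proof. by move=> [_ [_ [hm _]]]. Qed.

Lemma dchar_nz m chi a : is_dchar m chi -> (chi a != 0) = coprime a m.
Proof. by move=> [_ [_ [_ hz]]]; apply/idP/idP => /hz. Qed.

Lemma dchar0 m chi a : is_dchar m chi -> ~~ coprime a m -> chi a = 0.
Proof. by move=> H; rewrite -(@dchar_nz m chi a H) negbK => /eqP. Qed.

Lemma dchar1 m chi : is_dchar m chi -> chi 1%N = 1.
Proof.
move=> H; have h1 : chi 1%N != 0 by rewrite (@dchar_nz m chi 1 H) coprime1n.
have := @dchar_M m chi 1 1 H; rewrite muln1 => e.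
by apply: (mulfI h1); rewrite mulr1 -e.
Qed.

Lemma dchar_exp m chi a k : is_dchar m chi -> chi (a ^ k)%N = chi a ^+ k.
Proof.
move=> H; elim: k => [|k IH]; first by rewrite expn0 expr0 (@dchar1 m chi H).
by rewrite expnS (@dchar_M m chi a _ H) IH exprS.
Qed.

Lemma dchar_unit m chi a : is_dchar m chi -> coprime a m ->
  (chi a)^* * chi a = 1.
Proof.
move=> H ca; have m0 : (0 < m)%N by case: H.
have hp : chi a ^+ totient m = 1.
  by rewrite -(@dchar_exp m chi a _ H) (@dchar_modeq m chi _ _ H (Euler_exp_totient ca)) (@dchar1 m chi H).
have t0 : (0 < totient m)%N by rewrite totient_gt0.
have hn : `|chi a| = 1.
  apply/eqP; rewrite -(pexpr_eq1 (n:=totient m)) ?normr_ge0 -?lt0n //.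
  by rewrite -normrX hp normr1.
by rewrite mulrC -normCK hn expr1n.
Qed.

Lemma conjM (x y : R[i]) : (x * y)^* = x^* * y^*.
Proof. exact: rmorphM. Qed.

End S2.

Section S3.
Context {R : realType}.
Implicit Types chi psi : nat -> R[i].

Lemma gaussE m chi n : is_dchar m chi ->
  gauss m chi n = \sum_(k < m) chi k * E m (k * n).
Proof.
move=> H; have m0 : (0 < m)%N by case: H.
rewrite /gauss -(big_mkord xpredT (fun k => chi k * E m (k * n))).
rewrite big_nat_recr //= [in RHS]big_ltn //.
have hm : chi m = chi 0%N by rewrite -{1}(add0n m) -{1}(mul1n m) (@dchar_addM _ m chi 0 1 H).
rewrite hm.
by rewrite -[expi _]/(E m (m * n)) E_mul // /E mul0n mul0r expi0 addrC.
Qed.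

Lemma sum_dvd (V : nmodType) (e N : nat) (G : nat -> V) : (0 < e)%N ->
  \sum_(k < e * N | (e %| k)%N) G k = \sum_(j < N) G (e * j)%N.
Proof.
move=> e0; elim: N => [|N IH]; first by rewrite muln0 !big_ord0.
rewrite big_ord_recr /= -IH.
rewrite -(big_mkord (fun k => (e %| k)%N) G) -(big_mkord (fun k => (e %| k)%N) G).
rewrite mulnSr (big_cat_nat _ (n := e * N)) //= ?leq_addr //.
congr (_ + _).
have hd : (e %| e * N)%N by apply: dvdn_mulr. rewrite big_ltn_cond; last by lia. rewrite /= hd big1_seq ?addr0 // => k.
rewrite mem_index_iota => /andP[h1 /andP[h2 h3]].
have [j hj] := dvdnP h1; subst k; exfalso.
have : (N < j)%N by rewrite -(ltn_pmul2l e0) (mulnC e j).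
have : (j < N.+1)%N by rewrite -(ltn_pmul2l e0) mulnSr (mulnC e j).
lia.
Qed.

Lemma sum_split (V : nmodType) (m N : nat) (G : nat -> V) :
  \sum_(j < m * N) G j = \sum_(b < N) \sum_(a < m) G (m * b + a)%N.
Proof.
elim: N => [|N IH]; first by rewrite muln0 !big_ord0.
rewrite big_ord_recr /= -IH.
rewrite -(big_mkord xpredT G) -(big_mkord xpredT G).
rewrite mulnSr (big_cat_nat _ (n := m * N)) //= ?leq_addr //.
congr (_ + _).
rewrite -{1}[(m * N)%N]add0n big_addn addKn big_mkord.
by apply: eq_bigr => i _; rewrite addnC.
Qed.

Lemma sum_reindex (V : nmodType) (m c : nat) (F : nat -> V) :
  (0 < m)%N -> coprime c m ->
  \sum_(a < m) F a = \sum_(a < m) F ((c * a) %% m)%N.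
Proof.
move=> m0 cm.
pose h := fun i : 'I_m => Ordinal (ltn_pmod (c * i) m0).
have hi : injective h.
  move=> i j /(congr1 val) /= hij.
  have ci : coprime (c ^ (totient m).-1) m by rewrite coprimeXl.
  have hc : (c ^ (totient m).-1 * c = 1 %[mod m])%N.
    by rewrite -expnSr prednK ?totient_gt0 // Euler_exp_totient.
  apply: val_inj => /=.
  rewrite -(modn_small (ltn_ord i)) -(modn_small (ltn_ord j)).
  rewrite -[val i]mul1n -[val j]mul1n -modnMml -hc modnMml -mulnA -modnMmr hij.
  by rewrite modnMmr mulnA -modnMml hc modnMml.
rewrite (reindex_inj hi) /=; done.
Qed.
End S3.

Lemma moebius1 : moebius 1 = 1.
Proof. by []. Qed.

Lemma moebius_primeM p d : prime p ->
  moebius (p * d) = if (p %| d)%N then 0 else - moebius d.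
Proof.
move=> pp; have p0 := prime_gt0 pp.
have [->|d0] := posnP d; first by rewrite muln0 dvdn0.
have pd0 : (0 < p * d)%N by rewrite muln_gt0 p0.
rewrite /moebius muln_eq0 !(negbTE (lt0n_neq0 _)) //=.
have lp : logn p (p * d) = (logn p d).+1.
  by rewrite lognM // logn_prime // eqxx.
have pin : p \in primes (p * d) by rewrite mem_primes pp pd0 dvdn_mulr.
have [pdv|pdv] := boolP (p %| d)%N.
  suff -> : all (fun q => logn q (p * d) == 1%N) (primes (p * d)) = false by [].
  apply/negbTE/allPn; exists p => //.
  by rewrite lp eqSS -lt0n logn_gt0 mem_primes pp d0 pdv.
have hperm : perm_eq (primes (p * d)) (p :: primes d).
  apply: uniq_perm; first exact: primes_uniq.
    by rewrite /= primes_uniq andbT mem_primes (negbTE pdv) !andbF.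
  by move=> q; rewrite primesM // primes_prime // inE.
rewrite (perm_all _ hperm) (perm_size hperm) /= lp.
have -> : logn p d = 0%N by apply/eqP; rewrite -leqn0 leqNgt logn_gt0 mem_primes (negbTE pdv) !andbF.
rewrite eqxx /=.
have -> : all (fun q => logn q (p * d) == 1%N) (primes d)
        = all (fun q => logn q d == 1%N) (primes d).
  apply: eq_in_all => q; rewrite mem_primes => /and3P[qp _ qd].
  have qp' : q != p by apply: contraNneq pdv => <-.
  by rewrite lognM // logn_prime // (negbTE qp').
by case: ifP => //; rewrite exprS mulN1r.
Qed.

Lemma perm_div_mult n s : (0 < n)%N -> (0 < s)%N -> (s %| n)%N ->
  perm_eq [seq d <- divisors n | (s %| d)%N] [seq (s * d)%N | d <- divisors (n %/ s)].
Proof.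
move=> n0 s0 /dvdnP[k hk]; subst n.
have k0 : (0 < k)%N by move: n0; rewrite muln_gt0 => /andP[].
rewrite mulnK //.
apply: uniq_perm.
- by rewrite filter_uniq // divisors_uniq.
- rewrite map_inj_uniq ?divisors_uniq //; move=> a b /eqP; rewrite eqn_pmul2l // => /eqP.
  done.
move=> x; rewrite mem_filter -dvdn_divisors //; apply/andP/mapP.
- move=> [/dvdnP[j ->] hj]; exists j; last by rewrite mulnC.
  by rewrite -dvdn_divisors // -(dvdn_pmul2r s0).
- move=> [d]; rewrite -dvdn_divisors // => hd ->; split; first exact: dvdn_mulr.
  by rewrite mulnC dvdn_pmul2r.
Qed.

Lemma perm_div_inv n : (0 < n)%N ->
  perm_eq (divisors n) [seq (n %/ d)%N | d <- divisors n].
Proof.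
move=> n0; apply: uniq_perm.
- exact: divisors_uniq.
- rewrite map_inj_in_uniq ?divisors_uniq //.
  move=> a b; rewrite -!dvdn_divisors // => /dvdnP[ka hka] /dvdnP[kb hkb] e.
  have ka0 : (0 < ka)%N by move: n0; rewrite hka muln_gt0 => /andP[].
  have a0 : (0 < a)%N by move: n0; rewrite hka muln_gt0 => /andP[].
  have b0 : (0 < b)%N by move: n0; rewrite hkb muln_gt0 => /andP[].
  move: e; rewrite {1}hka {1}hkb !mulnK // => e; subst kb.
  by apply/eqP; rewrite -(eqn_pmul2l ka0) -hka -hkb.
move=> x; rewrite -dvdn_divisors //; apply/idP/mapP.
- move=> /dvdnP[k hk]; exists k.
    by rewrite -dvdn_divisors // hk dvdn_mulr.
  have x0 : (0 < x)%N by move: n0; rewrite hk muln_gt0 => /andP[].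
  have k0 : (0 < k)%N by move: n0; rewrite hk muln_gt0 => /andP[].
  by rewrite hk mulKn.
- move=> [d]; rewrite -dvdn_divisors // => /dvdnP[k hk] ->.
  have d0 : (0 < d)%N by move: n0; rewrite hk muln_gt0 => /andP[].
  by rewrite hk mulnK // dvdn_mulr.
Qed.

Lemma perm_div_ndvd n p : prime p -> (0 < n)%N -> (p %| n)%N ->
  perm_eq [seq d <- divisors n | ~~ (p %| d)%N] [seq d <- divisors (n %/ p) | ~~ (p %| d)%N].
Proof.
move=> pp n0 /dvdnP[k hk]; subst n.
have k0 : (0 < k)%N by move: n0; rewrite muln_gt0 => /andP[].
rewrite mulnK ?prime_gt0 //.
apply: uniq_perm; rewrite ?filter_uniq ?divisors_uniq //.
move=> x; rewrite !mem_filter -!dvdn_divisors //.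
case: (boolP (p %| x)%N) => //= px.
apply/idP/idP.
  by rewrite Gauss_dvdl // coprime_sym prime_coprime.
by move=> h; apply: dvdn_trans h (dvdn_mulr _ _).
Qed.


Lemma moebius_sum n : (0 < n)%N ->
  \sum_(d <- divisors n) moebius d = (n == 1%N)%:R.
Proof.
move=> n0; have [->|n1] := eqVneq n 1%N.
  rewrite (_ : divisors 1 = [:: 1%N]) // big_seq1. by [].
have n1' : (1 < n)%N by rewrite ltn_neqAle eq_sym n1 n0.
set p := pdiv n; have pp : prime p := pdiv_prime n1'.
have pn : (p %| n)%N := pdiv_dvd n.
rewrite (bigID (fun d => p %| d)%N) /= -(big_filter _ (fun d => p %| d)%N) -(big_filter _ (fun d => ~~ (p %| d))%N).
rewrite (perm_big _ (@perm_div_mult n p n0 (prime_gt0 pp) pn)).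
rewrite (perm_big _ (@perm_div_ndvd n p pp n0 pn)) big_map /=.
under eq_bigr => d _ do rewrite moebius_primeM //.
rewrite (bigID (fun d => p %| d)%N) /= big1 ?add0r; last by move=> i ->.
under eq_bigr => d hd do rewrite (negbTE hd).
by rewrite sumrN big_filter addNr.
Qed.


Lemma moebius_sum_final n s : (0 < n)%N -> (0 < s)%N ->
  \sum_(d <- divisors n | (s %| d)%N) moebius (n %/ d) = (s == n)%:R.
Proof.
move=> n0 s0; have [sn|sn] := boolP (s %| n)%N; last first.
  rewrite big1_seq; last first.
    move=> d /andP[sd]; rewrite -dvdn_divisors // => dn.
    by rewrite (dvdn_trans sd dn) in sn.
  by case: eqP => // e; rewrite e dvdnn in sn.
rewrite -big_filter (perm_big _ (@perm_div_mult n s n0 s0 sn)) big_map /=.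
have [k hk] := dvdnP sn; subst n.
have k0 : (0 < k)%N by move: n0; rewrite muln_gt0 => /andP[].
rewrite mulnK //.
under eq_bigr => d _ do rewrite [(k * s)%N]mulnC divnMl //.
rewrite -(big_map (fun d => k %/ d)%N xpredT moebius) -(perm_big _ (@perm_div_inv k k0)).
rewrite moebius_sum //.
have -> : (s == (k * s)%N) = (k == 1%N).
  by rewrite -{1}(mul1n s) eqn_pmul2r // eq_sym.
by [].
Qed.

Definition tfac (q0 n : nat) : nat := \prod_(p <- primes q0 | ~~ (p %| n)%N) p.
Definition lift (q0 q1 n : nat) : nat := (n + q1 * tfac q0 n)%N.

Lemma lift_coprime q0 q1 n : (0 < q0)%N -> coprime n q1 ->
  coprime (lift q0 q1 n) q0.
Proof.
move=> q00 cn; apply: contraT => nc.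
set x := lift q0 q1 n in nc *.
set g := gcdn x q0.
have g1 : (1 < g)%N.
  by rewrite ltn_neqAle eq_sym nc /= gcdn_gt0 q00 orbT.
set p := pdiv g; have pp : prime p := pdiv_prime g1.
have pg : (p %| g)%N := pdiv_dvd g.
have px : (p %| x)%N := dvdn_trans pg (dvdn_gcdl _ _).
have pq0 : (p %| q0)%N := dvdn_trans pg (dvdn_gcdr _ _).
have pin : p \in primes q0 by rewrite mem_primes pp q00 pq0.
have hpt : (p %| tfac q0 n)%N = ~~ (p %| n)%N.
  rewrite /tfac Euclid_dvd_prod // big_has_cond; apply/hasP/idP.
    move=> [i iin /andP[/= ni pi]].
    have ip : prime i by move: iin; rewrite mem_primes => /andP[].
    by move: pi; rewrite dvdn_prime2 // => /eqP ->.
  by move=> h; exists p => //=; rewrite h dvdnn.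
have [pn|pn] := boolP (p %| n)%N.
  move: px; rewrite /x /lift dvdn_addr // Euclid_dvdM // hpt pn orbF => pq1.
  have : (p %| gcdn n q1)%N by rewrite dvdn_gcd pn pq1.
  by rewrite (eqP cn) dvdn1 => /eqP p1; rewrite p1 in pp.
move: px; rewrite /x /lift dvdn_addl; last by apply: dvdn_mull; rewrite hpt.
by rewrite (negbTE pn).
Qed.

Lemma lift_mod q0 q1 n : lift q0 q1 n = n %[mod q1].
Proof. by rewrite /lift addnC mulnC modnMDl. Qed.

Section S7.
Context {R : realType}.
Implicit Types psi : nat -> R[i].

Lemma psi_eq_mod q0 q1 psi : is_dchar q0 psi -> (q1 %| q0)%N ->
  (forall c, coprime c q0 -> c = 1 %[mod q1] -> psi c = 1) ->
  forall x y, coprime x q0 -> coprime y q0 -> x = y %[mod q1] -> psi x = psi y.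
Proof.
move=> H dq hk x y cx cy exy.
have q00 : (0 < q0)%N by case: H.
set t := totient q0.
have t0 : (0 < t)%N by rewrite totient_gt0.
set c := (y * x ^ t.-1)%N.
have cc : coprime c q0 by rewrite coprimeMl cy coprimeXl.
have eu : (x ^ t = 1 %[mod q0])%N := Euler_exp_totient cx.
have hcx : (c * x = y %[mod q0])%N.
  by rewrite /c -mulnA -expnSr prednK // -modnMmr eu modnMmr muln1.
have hc1 : (c = 1 %[mod q1])%N.
  rewrite /c -modnMml -exy modnMml [(x * _)%N]mulnC -expnSr prednK //.
  by rewrite -(modn_dvdm _ dq) eu (modn_dvdm _ dq).
rewrite -(@dchar_modeq _ q0 psi _ _ H hcx) (@dchar_M _ q0 psi _ _ H) (hk c cc hc1).
by rewrite mul1r.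
Qed.

Definition phi q0 q1 psi (n : nat) : R[i] :=
  if coprime n q1 then psi (lift q0 q1 n) else 0.

Lemma phi_dchar q0 q1 psi : is_dchar q0 psi -> (q1 %| q0)%N ->
  (forall c, coprime c q0 -> c = 1 %[mod q1] -> psi c = 1) ->
  is_dchar q1 (phi q0 q1 psi) /\ forall n, psi n = phi q0 q1 psi n * principal R q0 n.
Proof.
move=> H dq hk.
have q00 : (0 < q0)%N by case: H.
have q10 : (0 < q1)%N := dvdn_gt0 q00 dq.
have eqm := @psi_eq_mod q0 q1 psi H dq hk.
have lc n : coprime n q1 -> coprime (lift q0 q1 n) q0 by move=> h; apply: lift_coprime.
split; last first.
  move=> n; rewrite /phi /principal.
  have [cn|cn] := boolP (coprime n q0).
    rewrite (coprime_dvdr dq cn) mulr1; apply: eqm => //; first exact: lc (coprime_dvdr dq cn).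
    by rewrite lift_mod.
  by rewrite mulr0 (@dchar0 _ q0 psi n H cn).
split=> //; split; [|split].
- move=> n; rewrite /phi.
  have e : coprime (n + q1) q1 = coprime n q1 by rewrite -coprime_modl modnDr coprime_modl.
  rewrite e; case: ifP => // cn; apply: eqm; rewrite ?lc ?e //.
  by rewrite !lift_mod modnDr.
- move=> a b; rewrite /phi coprimeMl.
  have [ca|ca] := boolP (coprime a q1); last by rewrite mul0r.
  have [cb|cb] := boolP (coprime b q1); last by rewrite mulr0.
  rewrite -(@dchar_M _ q0 psi _ _ H); apply: eqm.
  + by apply: lc; rewrite coprimeMl ca cb.
  + by rewrite coprimeMl !lc.
  + by rewrite (lift_mod q0 q1 (a * b)) -[RHS]modnMm (lift_mod q0 q1 a) (lift_mod q0 q1 b) modnMm.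
- move=> n; rewrite /phi; case: ifP => cn; split => //.
  + by move=> _; rewrite (@dchar_nz _ q0 psi _ H) lc.
  + by move=> /eqP.
Qed.

Lemma prim_ker q0 q1 psi : primitive q0 psi -> (q1 %| q0)%N -> q1 != q0 ->
  ~ (forall c, coprime c q0 -> c = 1 %[mod q1] -> psi c = 1).
Proof.
move=> [H hp] dq nq hk.
have [h1 h2] := @phi_dchar q0 q1 psi H dq hk.
by apply: (hp q1 (phi q0 q1 psi) dq nq); split => //; split => //; split.
Qed.
End S7.

Section S8.
Context {R : realType}.
Implicit Types psi : nat -> R[i].

Definition Tsum q0 psi (m : nat) : R[i] := \sum_(a < q0) psi a * E q0 (a * m).

Lemma T_shift q0 psi c m : is_dchar q0 psi -> coprime c q0 ->
  Tsum q0 psi m = psi c * Tsum q0 psi (c * m).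
Proof.
move=> H cc; have q00 : (0 < q0)%N by case: H.
rewrite /Tsum (@sum_reindex _ q0 c (fun a => psi a * E q0 (a * m)) q00 cc) mulr_sumr; apply: eq_bigr => a _.
rewrite -(@dchar_modeq _ q0 psi (c * a) _ H) ?modn_mod // (@dchar_M _ q0 psi _ _ H).
rewrite -mulrA; congr (_ * (_ * _)); apply: E_modeq => //.
by rewrite modnMml mulnCA mulnA.
Qed.

Lemma T_modeq q0 psi m m' : (0 < q0)%N -> m = m' %[mod q0] ->
  Tsum q0 psi m = Tsum q0 psi m'.
Proof.
move=> q00 h; apply: eq_bigr => a _; congr (_ * _); apply: E_modeq => //.
by rewrite -modnMmr h modnMmr.
Qed.

Lemma T_coprime q0 psi m : is_dchar q0 psi -> coprime m q0 ->
  Tsum q0 psi m = (psi m)^* * Tsum q0 psi 1.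
Proof.
move=> H cm; rewrite (@T_shift q0 psi m 1 H cm) muln1 mulrA.
by rewrite (@dchar_unit _ q0 psi m H cm) mul1r.
Qed.

Lemma T_ncoprime q0 psi m : primitive q0 psi -> ~~ coprime m q0 ->
  Tsum q0 psi m = 0.
Proof.
move=> Hp ncm; have H := Hp.1; have q00 : (0 < q0)%N by case: H.
set g := gcdn m q0.
have g0 : (0 < g)%N by rewrite gcdn_gt0 q00 orbT.
have gq : (g %| q0)%N := dvdn_gcdr _ _.
have gm : (g %| m)%N := dvdn_gcdl _ _.
set q1 := (q0 %/ g)%N.
have hq : q0 = (q1 * g)%N by rewrite divnK.
have dq : (q1 %| q0)%N by rewrite [X in (_ %| X)%N]hq dvdn_mulr.
have q10 : (0 < q1)%N by rewrite /q1 divn_gt0 // dvdn_leq.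
have nq : q1 != q0.
  apply: contra ncm => /eqP e; rewrite /coprime -/g.
  have : (q1 * g == q1 * 1)%N by rewrite -hq e muln1.
  by rewrite eqn_pmul2l.
apply/eqP; apply: contraT => hT; exfalso; apply: (@prim_ker _ q0 q1 psi Hp dq nq) => c cc c1.
have hm : (c * m = m %[mod q0])%N.
  have [k hk] := dvdnP gm; rewrite hk hq mulnA -!muln_modl.
  by rewrite -modnMml c1 modnMml mul1n.
have := @T_shift q0 psi c m H cc; rewrite (@T_modeq q0 psi (c * m) m q00 hm).
move=> /eqP; rewrite -subr_eq0 -{1}[Tsum q0 psi m]mul1r -mulrBl mulf_eq0 (negbTE hT) orbF.
by rewrite subr_eq0 eq_sym => /eqP.
Qed.
End S8.

Section S9.
Context {R : realType}.
Implicit Types chi psi : nat -> R[i].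

Lemma intr_sum (s : seq nat) (F : nat -> int) :
  ((\sum_(i <- s) F i)%:~R : R[i]) = \sum_(i <- s) (F i)%:~R.
Proof. by rewrite rmorph_sum. Qed.

Lemma stepA q q0 chi psi k : induces q0 psi q chi ->
  chi k = \sum_(e <- divisors (q %/ q0)) (moebius e)%:~R * (if (e %| k)%N then psi k else 0).
Proof.
move=> [H0 [H [dq hchi]]].
have q0p : (0 < q0)%N by case: H0.
have qp : (0 < q)%N by case: H.
set r := (q %/ q0)%N.
have hq : q = (q0 * r)%N by rewrite mulnC divnK.
have r0 : (0 < r)%N by move: qp; rewrite hq muln_gt0 => /andP[].
rewrite hchi /principal.
have [ck|ck] := boolP (coprime k q0); last first.
  rewrite (@dchar0 _ q0 psi k H0 ck) mul0r big1 // => e _; case: ifP => _; by rewrite mulr0.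
have -> : \sum_(e <- divisors r) (moebius e)%:~R * (if (e %| k)%N then psi k else 0)
        = \sum_(e <- divisors r | (e %| k)%N) (moebius e)%:~R * psi k.
  by rewrite [RHS]big_mkcond; apply: eq_bigr => e _; case: ifP; rewrite ?mulr0.
rewrite -big_filter.
have gp : (0 < gcdn k r)%N by rewrite gcdn_gt0 r0 orbT.
have hp : perm_eq [seq e <- divisors r | (e %| k)%N] (divisors (gcdn k r)).
  apply: uniq_perm; rewrite ?filter_uniq ?divisors_uniq //.
  by move=> e; rewrite mem_filter -!dvdn_divisors // dvdn_gcd andbC.
rewrite (perm_big _ hp) -mulr_suml -intr_sum moebius_sum //.
rewrite hq coprimeMr ck /= /coprime mulrC.
by case: (gcdn k r == 1%N).
Qed.

Lemma inner_sum q0 psi s d : is_dchar q0 psi -> (0 < s)%N ->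
  \sum_(j < q0 * s) psi j * E (q0 * s) (j * d)
  = if (s %| d)%N then s%:R * Tsum q0 psi (d %/ s) else 0.
Proof.
move=> H s0; have q00 : (0 < q0)%N by case: H.
rewrite (@sum_split _ q0 s (fun j => psi j * E (q0 * s) (j * d))).
have e1 b a : psi (q0 * b + a)%N * E (q0 * s) ((q0 * b + a) * d)
   = E s (b * d) * (psi a * E (q0 * s) (a * d)).
  rewrite addnC mulnC (@dchar_addM _ q0 psi a b H) mulnDl E_D.
  rewrite [(b * q0)%N]mulnC -mulnA E_scale //.
  by rewrite mulrA mulrC.
under eq_bigr => b _ do under eq_bigr => a _ do rewrite e1.
under eq_bigr => b _ do rewrite -mulr_sumr.
rewrite -mulr_suml geomE //.
case: ifP => sd; last by rewrite mul0r.
congr (_ * _); rewrite /Tsum; apply: eq_bigr => a _.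
have [d' ->] := dvdnP sd; rewrite mulnK //.
by rewrite mulnA [(a * d' * s)%N]mulnC [(q0 * s)%N]mulnC E_scale.
Qed.

Lemma stepB q q0 chi psi d : induces q0 psi q chi ->
  gauss q chi d = \sum_(e <- divisors (q %/ q0))
     (moebius e)%:~R * psi e * (if ((q %/ q0) %/ e %| d)%N
        then ((q %/ q0) %/ e)%:R * Tsum q0 psi (d %/ ((q %/ q0) %/ e)) else 0).
Proof.
move=> Hind; have [H0 [H [dq hchi]]] := Hind.
have q0p : (0 < q0)%N by case: H0.
have qp : (0 < q)%N by case: H.
set r := (q %/ q0)%N.
have hq : q = (q0 * r)%N by rewrite mulnC divnK.
have r0 : (0 < r)%N by move: qp; rewrite hq muln_gt0 => /andP[].
rewrite (@gaussE _ q chi d H).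
under eq_bigr => k _ do rewrite (@stepA q q0 chi psi k Hind) mulr_suml.
rewrite exchange_big /=; apply: eq_big_seq => e; rewrite -dvdn_divisors // => er.
have e0 : (0 < e)%N := dvdn_gt0 r0 er.
set s := (r %/ e)%N.
have hr : r = (s * e)%N by rewrite /s divnK.
have hq' : q = (e * (q0 * s))%N by rewrite hq hr [RHS]mulnC -mulnA.
have s0 : (0 < s)%N by move: qp; rewrite hq' !muln_gt0 => /and3P[].
rewrite -(@inner_sum q0 psi s d H0 s0) mulr_sumr.
have -> : \sum_(k < q) (moebius e)%:~R * (if (e %| k)%N then psi k else 0) * E q (k * d)
        = \sum_(k < q | (e %| k)%N) (moebius e)%:~R * psi k * E q (k * d).
  by rewrite [RHS]big_mkcond; apply: eq_bigr => k _; case: ifP; rewrite ?mulr0 ?mul0r.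
rewrite hq' (@sum_dvd _ e (q0 * s) (fun k => (moebius e)%:~R * psi k * E (e * (q0 * s)) (k * d)) e0); apply: eq_bigr => j _.
rewrite (@dchar_M _ q0 psi _ _ H0) -mulnA E_scale //.
by rewrite !mulrA.
Qed.
End S9.

Lemma intr_sumP {R : realType} (s : seq nat) (P : pred nat) (F : nat -> int) :
  ((\sum_(i <- s | P i) F i)%:~R : R[i]) = \sum_(i <- s | P i) (F i)%:~R.
Proof. by rewrite rmorph_sum. Qed.

Lemma stepC {R : realType} q0 (psi : nat -> R[i]) m : primitive q0 psi ->
  Tsum q0 psi m = (psi m)^* * Tsum q0 psi 1.
Proof.
move=> Hp; have H := Hp.1.
have [cm|cm] := boolP (coprime m q0); first exact: T_coprime.
by rewrite (@T_ncoprime _ q0 psi m Hp cm) (@dchar0 _ q0 psi m H cm) rmorph0 mul0r.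
Qed.

Theorem lemma4p2 (R : realType) (q q0 : nat) (chi psi : nat -> R[i])
  (Hpsi : primitive q0 psi) (Hind : induces q0 psi q chi) (n : nat) (Hn : (0 < n)%N) :
  \sum_(d <- divisors n)
     gauss q chi d * (moebius (n %/ d)%N)%:~R * (psi (n %/ d)%N)^*
  = if (n %| q %/ q0)%N then
      n%:R * gauss q0 psi 1 * (moebius (q %/ (n * q0))%N)%:~R * psi (q %/ (n * q0))%N
    else 0.
Proof.
have [H0 [H [dq hchi]]] := Hind.
have q0p : (0 < q0)%N by case: H0.
have qp : (0 < q)%N by case: H.
set r := (q %/ q0)%N.
have hq : q = (q0 * r)%N by rewrite mulnC divnK.
have r0 : (0 < r)%N by move: qp; rewrite hq muln_gt0 => /andP[].
set tau := Tsum q0 psi 1.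
have e1 : forall d, d \in divisors n ->
  gauss q chi d * (moebius (n %/ d)%N)%:~R * (psi (n %/ d)%N)^*
  = \sum_(e <- divisors r) (moebius e)%:~R * psi e * (r %/ e)%:R * tau *
      (if (r %/ e %| d)%N then (moebius (n %/ d)%N)%:~R * (psi (n %/ (r %/ e))%N)^* else 0).
  move=> d; rewrite -dvdn_divisors // => dn.
  rewrite (@stepB _ q q0 chi psi d Hind) -/r !mulr_suml; apply: eq_big_seq => e.
  rewrite -dvdn_divisors // => er.
  case: ifP => sd; last by rewrite !mulr0 !mul0r.
  rewrite (@stepC _ q0 psi _ Hpsi).
  have [u hu] := dvdnP sd; have [v hv] := dvdnP dn.
  have s0 : (0 < r %/ e)%N by rewrite divn_gt0 ?(dvdn_gt0 r0 er) // dvdn_leq.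
  have hnd : (n %/ (r %/ e) = (n %/ d) * (d %/ (r %/ e)))%N.
    have d0 : (0 < d)%N := dvdn_gt0 Hn dn.
    rewrite hv (mulnK _ d0) hu (mulnK _ s0) mulnA (mulnK _ s0).
    by [].
  rewrite hnd (@dchar_M _ q0 psi _ _ H0) rmorphM.
  rewrite /tau; ring.
rewrite (eq_big_seq _ e1) exchange_big /=.
have e2 : forall e, e \in divisors r ->
   \sum_(d <- divisors n) (moebius e)%:~R * psi e * (r %/ e)%:R * tau *
      (if (r %/ e %| d)%N then (moebius (n %/ d)%N)%:~R * (psi (n %/ (r %/ e))%N)^* else 0)
   = if (r %/ e == n)%N then n%:R * tau * (moebius e)%:~R * psi e else 0.
  move=> e; rewrite -dvdn_divisors // => er.
  have s0 : (0 < r %/ e)%N by rewrite divn_gt0 ?(dvdn_gt0 r0 er) // dvdn_leq.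
  rewrite -mulr_sumr -big_mkcond /= -mulr_suml -intr_sumP moebius_sum_final //.
  case: eqP => [hs|_]; last by rewrite mul0r mulr0.
  rewrite hs divnn Hn (@dchar1 _ q0 psi H0) rmorph1 /=.
  ring.
rewrite (eq_big_seq _ e2).
have gt : gauss q0 psi 1 = tau by rewrite (@gaussE _ q0 psi 1 H0).
rewrite gt mulnC divnMA -/r.
case: ifP => nr; last first.
  rewrite big1_seq // => e /andP[_]; rewrite -dvdn_divisors // => er.
  case: eqP => // hs; exfalso; move: nr; rewrite -hs.
  by rewrite -{2}(divnK er) dvdn_mulr.
have [k hk] := dvdnP nr.
have k0 : (0 < k)%N by move: r0; rewrite hk muln_gt0 => /andP[].
have hrn : (r %/ n = k)%N by rewrite hk mulnK.
have kin : k \in divisors r by rewrite -dvdn_divisors // hk dvdn_mulr.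
rewrite (bigD1_seq k kin (divisors_uniq r)) /= hrn.
rewrite {1}hk mulKn // eqxx big1_seq ?addr0; first by ring.
move=> e /andP[ne]; rewrite -dvdn_divisors // => er.
case: eqP => // hs; exfalso; move/negP: ne; apply.
have [j hj] := dvdnP er.
have e0 : (0 < e)%N := dvdn_gt0 r0 er.
apply/eqP; move: hs; rewrite hj mulnK // => hs.
by move: hk; rewrite hj hs mulnC => /eqP; rewrite eqn_pmul2r // => /eqP.
Qed.
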